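(* Let $N, M$ be positive integers, let $\mathbf{a} \in \mathbb{C}^{N}$ and $\mathbf{B} \in \mathbb{C}^{N \times M}$ be constants. For diagonal matrices $\mathbf{Z}_1,\mathbf{Z}_2 \in \mathbb{C}^{N\times N}$ and vectors $\mathbf{z}_3,\mathbf{z}_4 \in \mathbb{C}^M$ define \[ \begin{aligned} \Lambda_{\mathbf{a},\mathbf{B}}(\mathbf{Z}_1,\mathbf{Z}_2,\mathbf{z}_3,\mathbf{z}_4) \triangleq\ & \tfrac14\big\|\mathrm{diag}(\mathbf{Z}_1^* ) + \mathrm{diag}(\mathbf{a})\mathbf{B}\mathbf{z}_3\big\|_2^2 \\ & - \tfrac12\Re\Big\{\big(\mathrm{diag}(\mathbf{Z}_2^* ) - \mathrm{diag}(\mathbf{a})\mathbf{B}\mathbf{z}_4\big)^{\mathsf H}\big(\mathrm{diag}(\mathbf{Z}_1^* ) - \mathrm{diag}(\mathbf{a})\mathbf{B}\mathbf{z}_3\big)\Big\} \\ & + \tfrac14\big\|\mathrm{diag}(\mathbf{Z}_2^* ) - \mathrm{diag}(\mathbf{a})\mathbf{B}\mathbf{z}_4\big\|_2^2 . \end{aligned} \] Fix a diagonal matrix $\mathbf{X}_0 \in \mathbb{C}^{N\times N}$ and a vector $\mathbf{y}_0 \in \mathbb{C}^M$. Let $\mathbf{X} \in \mathbb{C}^{N\times N}$ be diagonal, $\mathbf{y} \in \mathbb{C}^M$, and let $\rho,\kappa \in \mathbb{R}$ satisfy \[ \rho \ge \Lambda_{\mathbf{a},\mathbf{B}}(\mathbf{X},\mathbf{X}_0,\mathbf{y},\mathbf{y}_0),\quad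 \rho \ge \Lambda_{\mathbf{a},\mathbf{B}}(\mathbf{X},\mathbf{X}_0,-\mathbf{y},-\mathbf{y}_0), \] \[ \kappa \ge \Lambda_{\mathbf{a},\mathbf{B}}(\mathbf{X},\mathbf{X}_0,j\mathbf{y},j\mathbf{y}_0),\quad \kappa \ge \Lambda_{\mathbf{a},\mathbf{B}}(\mathbf{X},\mathbf{X}_0,-j\mathbf{y},-j\mathbf{y}_0). \] Then \[ |\mathbf{a}^{\mathsf T}\mathbf{X}\mathbf{B}\mathbf{y}|^2 \le \rho^2 + \kappa^2 . \] Moreover, each of the four functions $(\mathbf{X},\mathbf{y}) \mapsto \Lambda_{\mathbf{a},\mathbf{B}}(\mathbf{X},\mathbf{X}_0,\pm\mathbf{y},\pm\mathbf{y}_0)$, $(\mathbf{X},\mathbf{y}) \mapsto \Lambda_{\mathbf{a},\mathbf{B}}(\mathbf{X},\mathbf{X}_0,\pm j\mathbf{y},\pm j\mathbf{y}_0)$ is jointly convex in $(\mathbf{X},\mathbf{y})$ (as a real-valued function of the real and imaginary parts of the diagonal entries of $\mathbf{X}$ and the entries of $\mathbf{y}$), so the upper bound $\rho^2+\kappa^2$ together with these constraints is convex.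
   Context: $j=\sqrt{-1}$. $(\cdot)^*$ denotes entrywise complex conjugation, $(\cdot)^{\mathsf T}$ transpose, $(\cdot)^{\mathsf H}$ conjugate transpose, $\|\cdot\|_2$ the Euclidean norm, $\Re\{\cdot\}$ the real part, $|\cdot|$ the modulus. For a vector $\mathbf{v}$, $\mathrm{diag}(\mathbf{v})$ is the diagonal matrix with $\mathbf{v}$ on its diagonal; for a diagonal matrix $\mathbf{Z}$, $\mathrm{diag}(\mathbf{Z})$ is the vector of its diagonal entries, and $\mathrm{diag}(\mathbf{Z}^* )$ is the entrywise conjugate of that vector. *)

(* Defs.v *)
From HB Require Import structures.
From mathcomp Require Import all_boot all_order all_algebra.
From mathcomp Require Import reals complex.
Set Implicit Arguments. Unset Strict Implicit. Unset Printing Implicit Defensive.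
Import Order.TTheory GRing.Theory Num.Theory.
Local Open Scope ring_scope.
Local Open Scope complex_scope.

Section Defs.
Variable R : realType.
Local Notation C := R[i].

Definition cnorm2 n (v : 'cV[C]_n) : R := \sum_(i < n) ComplexField.Normc.normc (v i 0) ^+ 2.

Definition hdot n (u w : 'cV[C]_n) : C := \sum_(i < n) (u i 0)^* * w i 0.

Definition diagconj n (Z : 'M[C]_n) : 'cV[C]_n := \col_i (Z i i)^*.

Definition daBz N M (a : 'cV[C]_N) (B : 'M[C]_(N, M)) (z : 'cV[C]_M) : 'cV[C]_N :=
  diag_mx a^T *m B *m z.

Definition Lambda N M (a : 'cV[C]_N) (B : 'M[C]_(N, M))
  (Z1 Z2 : 'M[C]_N) (z3 z4 : 'cV[C]_M) : R :=
  4^-1 * cnorm2 (diagconj Z1 + daBz a B z3)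
  - 2^-1 * complex.Re (hdot (diagconj Z2 - daBz a B z4) (diagconj Z1 - daBz a B z3))
  + 4^-1 * cnorm2 (diagconj Z2 - daBz a B z4).

(* joint convexity of f in (X, y), X ranging over diagonal matrices, as a
   function of the real and imaginary parts (real convex combinations) *)
Definition jointly_convex N M (f : 'M[C]_N -> 'cV[C]_M -> R) : Prop :=
  forall (X1 X2 : 'M[C]_N) (y1 y2 : 'cV[C]_M) (t : R),
    is_diag_mx X1 -> is_diag_mx X2 -> 0 <= t <= 1 ->
    f (t%:C *: X1 + (1 - t)%:C *: X2) (t%:C *: y1 + (1 - t)%:C *: y2)
      <= t * f X1 y1 + (1 - t) * f X2 y2.
End Defs.

(* Main.v *)
Require Import Defs.
From HB Require Import structures.
From mathcomp Require Import all_boot all_order all_algebra.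
From mathcomp Require Import reals complex.
From mathcomp Require Import ring lra.
Import Order.TTheory GRing.Theory Num.Theory.
Local Open Scope ring_scope.
Local Open Scope complex_scope.
Section S.
Variable R : realType.
Local Notation C := R[i].
Lemma normc2 (x : C) : ComplexField.Normc.normc x ^+ 2 = complex.Re x ^+ 2 + complex.Im x ^+ 2.
Proof. case: x => a b /=. rewrite sqr_sqrtr //. by rewrite addr_ge0 // sqr_ge0. Qed.
Definition ell (x1 d3 x2 d4 : C) : R :=
  4^-1 * ComplexField.Normc.normc (x1^* + d3) ^+ 2
  - 2^-1 * complex.Re ((x2^* - d4)^* * (x1^* - d3))
  + 4^-1 * ComplexField.Normc.normc (x2^* - d4) ^+ 2.
Lemma ReD (x y : C) : complex.Re (x + y) = complex.Re x + complex.Re y.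
Proof. by case: x; case: y. Qed.
Lemma ReSum n (f : 'I_n -> C) : complex.Re (\sum_i f i) = \sum_i complex.Re (f i).
Proof. exact: (big_morph _ ReD). Qed.
Lemma daBzE N M (a : 'cV[C]_N) (B : 'M[C]_(N, M)) z i :
  daBz a B z i 0 = a i 0 * (B *m z) i 0.
Proof. by rewrite /daBz -mulmxA mul_diag_mx !mxE. Qed.
Lemma LambdaE N M (a : 'cV[C]_N) (B : 'M[C]_(N, M)) Z1 Z2 z3 z4 :
  Lambda a B Z1 Z2 z3 z4 =
  \sum_i ell (Z1 i i) (daBz a B z3 i 0) (Z2 i i) (daBz a B z4 i 0).
Proof.
rewrite /Lambda /ell /cnorm2 /hdot ReSum !mulr_sumr -sumrN -!big_split /=.
apply: eq_bigr => i _; by rewrite !mxE.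
Qed.
Lemma wE N M (a : 'cV[C]_N) (B : 'M[C]_(N, M)) (X : 'M[C]_N) (y : 'cV[C]_M) : is_diag_mx X ->
  (a^T *m X *m B *m y) 0 0 = \sum_i X i i * (a i 0 * (B *m y) i 0).
Proof.
case/diag_mxP => d ->.
rewrite -!mulmxA mul_diag_mx mxE; apply: eq_bigr => i _.
rewrite !mxE eqxx mulr1n; ring.
Qed.
Lemma ell_cvx (t : R) (x y p r v q : C) : 0 <= t <= 1 ->
  ell (t%:C * x + (1 - t)%:C * y) (t%:C * p + (1 - t)%:C * r) v q <=
  t * ell x p v q + (1 - t) * ell y r v q.
Proof.
move=> /andP[t0 t1].
have ht : 0 <= t * (1 - t) by rewrite mulr_ge0 // subr_ge0.
rewrite /ell !normc2.
case: x => x1 x2; case: y => y1 y2; case: p => p1 p2; case: r => r1 r2;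
 case: v => v1 v2; case: q => q1 q2 /=.
have h1 := mulr_ge0 ht (sqr_ge0 ((x1 + p1) - (y1 + r1))).
have h2 := mulr_ge0 ht (sqr_ge0 ((- x2 + p2) - (- y2 + r2))).
nra.
Qed.
Lemma ell_ge (x p v q : C) : complex.Re (x * p) <= ell x p v q.
Proof.
rewrite /ell !normc2.
case: x => x1 x2; case: p => p1 p2; case: v => v1 v2; case: q => q1 q2 /=.
have h1 := sqr_ge0 ((x1 - p1) - (v1 - q1)); have h2 := sqr_ge0 ((- x2 - p2) - (- v2 - q2)).
nra.
Qed.
Lemma final (w : C) (rho kappa : R) :
  complex.Re (1 * w) <= rho -> complex.Re (-1 * w) <= rho ->
  complex.Re ('i * w) <= kappa -> complex.Re (- 'i * w) <= kappa ->
  ComplexField.Normc.normc w ^+ 2 <= rho ^+ 2 + kappa ^+ 2.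
Proof.
rewrite normc2; case: w => p q /= h1 h2 h3 h4.
nra.
Qed.
Lemma lower N M (a : 'cV[C]_N) (B : 'M[C]_(N, M)) (X X0 : 'M[C]_N) (y y0 : 'cV[C]_M) c :
  is_diag_mx X ->
  complex.Re (c * (a^T *m X *m B *m y) 0 0) <= Lambda a B X X0 (c *: y) (c *: y0).
Proof.
move=> hX; rewrite LambdaE wE // mulr_sumr ReSum; apply: ler_sum => i _.
have -> : daBz a B (c *: y) i 0 = c * (a i 0 * (B *m y) i 0).
  by rewrite daBzE -scalemxAr mxE; ring.
by rewrite mulrCA; apply: ell_ge.
Qed.
Lemma cvx N M (a : 'cV[C]_N) (B : 'M[C]_(N, M)) (X0 : 'M[C]_N) (z : 'cV[C]_M)
  (f : 'cV[C]_M -> 'cV[C]_M) :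
  (forall (t : R) y1 y2, f (t%:C *: y1 + (1 - t)%:C *: y2) = t%:C *: f y1 + (1 - t)%:C *: f y2) ->
  jointly_convex (fun X y => Lambda a B X X0 (f y) z).
Proof.
move=> hf X1 X2 y1 y2 t _ _ ht /=.
rewrite !LambdaE hf !mulr_sumr -big_split; apply: ler_sum => i _ /=.
have -> : daBz a B (t%:C *: f y1 + (1 - t)%:C *: f y2) i 0 =
   t%:C * daBz a B (f y1) i 0 + (1 - t)%:C * daBz a B (f y2) i 0.
  by rewrite !daBzE mulmxDr -!scalemxAr !mxE; ring.
rewrite !mxE.
exact: ell_cvx.
Qed.
End S.

Theorem lemma2 (R : realType) (N M : nat) (hN : (0 < N)%N) (hM : (0 < M)%N)
  (a : 'cV[R[i]]_N) (B : 'M[R[i]]_(N, M))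
  (X0 : 'M[R[i]]_N) (y0 : 'cV[R[i]]_M) (hX0 : is_diag_mx X0) :
  (forall (X : 'M[R[i]]_N) (y : 'cV[R[i]]_M) (rho kappa : R),
     is_diag_mx X ->
     Lambda a B X X0 y y0 <= rho ->
     Lambda a B X X0 (- y) (- y0) <= rho ->
     Lambda a B X X0 ('i *: y) ('i *: y0) <= kappa ->
     Lambda a B X X0 (- ('i *: y)) (- ('i *: y0)) <= kappa ->
     ComplexField.Normc.normc ((a^T *m X *m B *m y) 0 0) ^+ 2 <= rho ^+ 2 + kappa ^+ 2)
  /\ jointly_convex (fun X y => Lambda a B X X0 y y0)
  /\ jointly_convex (fun X y => Lambda a B X X0 (- y) (- y0))
  /\ jointly_convex (fun X y => Lambda a B X X0 ('i *: y) ('i *: y0))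
  /\ jointly_convex (fun X y => Lambda a B X X0 (- ('i *: y)) (- ('i *: y0))).
Proof.
split.
  move=> X y rho kappa hX h1 h2 h3 h4; apply: final.
  - by apply: le_trans h1; have := @lower R N M a B X X0 y y0 1 hX; rewrite !scale1r.
  - by apply: le_trans h2; have := @lower R N M a B X X0 y y0 (-1) hX; rewrite !scaleN1r.
  - exact: le_trans (@lower R N M a B X X0 y y0 'i hX) h3.
  - by apply: le_trans h4; have := @lower R N M a B X X0 y y0 (- 'i) hX; rewrite !scaleNr.
split; first exact: (@cvx R N M a B X0 y0 (fun y => y)).
split.
  apply: (@cvx R N M a B X0 (- y0) (fun y => - y)) => t y1 y2.
  by rewrite opprD -!scalerN.
split.
  apply: (@cvx R N M a B X0 ('i *: y0) (fun y => 'i *: y)) => t y1 y2.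
  by rewrite scalerDr !scalerA (mulrC 'i t%:C) (mulrC 'i (1 - t)%:C).
apply: (@cvx R N M a B X0 (- ('i *: y0)) (fun y => - ('i *: y))) => t y1 y2.
by rewrite scalerDr opprD !scalerN !scalerA (mulrC 'i t%:C) (mulrC 'i (1 - t)%:C).
Qed.
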